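(* Let $d:\Sigma^n\to\Sigma$ be a depth assignment and let $s,t\in\Sigma^n$ be such that $(s,t)$ is a valid arc of the de Bruijn graph $B_n$. Then \[e_{s[0]} \equiv P(H(s)+e_{d_s}) - P(H(t)+e_{d_t}) \mod K.\]
   Context: Let $k\ge 1$ be an integer, $\Sigma=\{0,1,\dots,k-1\}$ with arithmetic on symbols taken modulo $k$, and $n\ge 1$. For $s\in\Sigma^n$ write $s=s[0]\cdots s[n-1]$. The de Bruijn graph $B_n$ has node set $\Sigma^n$ and an arc $(s,t)$ iff $s[1]\cdots s[n-1]=t[0]\cdots t[n-2]$. A depth assignment is any function $d:\Sigma^n\to\Sigma$, written $s\mapsto d_s$. An arc $(s,t)$ of $B_n$ is valid (with respect to $d$) if, with $b=s[0]$ and $c=t[n-1]$, either ($b+1=c$ and $d_s=d_t$) or ($b+1=d_t$ and $c=d_s$). The histogram $H(s):\Sigma\to\mathbb{Z}$ counts occurrences of each symbol in $s$; $e_b$ is the indicator function of $b\in\Sigma$; $K$ is the constant function $1$ on $\Sigma$; $P(H)(i)=\sum_{j=0}^i H(j)$ is the partial sum of $H:\Sigma\to\mathbb{Z}$; $F\equiv G\mod K$ means $F-G$ is an integer multiple of $K$. *)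

(* Defs.v *)
From mathcomp Require Import all_boot all_order all_algebra.
Set Implicit Arguments. Unset Strict Implicit. Unset Printing Implicit Defensive.
Import GRing.Theory.
Local Open Scope ring_scope.

(* Alphabet Sigma = 'I_k (symbols 0..k-1, arithmetic mod k); words of length n
   are n.-tuples over 'I_k. *)
Definition word (k n : nat) := (n.-tuple 'I_k)%type.

(* s[i] as a natural number (value in 0..k-1 when i < n). *)
Definition sym (k n : nat) (s : word k n) (i : nat) : nat := nth 0%N (map val s) i.

Definition dB_arc (k n : nat) (s t : word k n) : Prop :=
  forall i : nat, (i.+1 < n)%N -> sym s i.+1 = sym t i.

Definition depth_assignment (k n : nat) := word k n -> 'I_k.

Definition valid_arc (k n : nat) (d : depth_assignment k n) (s t : word k n) : Prop :=
  let b := sym s 0 in let c := sym t n.-1 in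
  ((b.+1 %% k = c)%N /\ d s = d t) \/ ((b.+1 %% k = d t)%N /\ c = d s).

Definition hist (k n : nat) (s : word k n) : 'I_k -> int :=
  fun a => (count (pred1 a) s)%:Z.

Definition ind (k : nat) (b : nat) : 'I_k -> int := fun a => ((val a == b) : nat)%:Z.

Definition psum (k : nat) (H : 'I_k -> int) : 'I_k -> int :=
  fun i => \sum_(j < k | (val j <= val i)%N) H j.

(* F == G mod K, K the constant function 1: F - G is an integer multiple of K. *)
Definition eqmodK (k : nat) (F G : 'I_k -> int) : Prop :=
  exists m : int, forall i : 'I_k, F i - G i = m.

(* Main.v *)
Require Import Defs.
From mathcomp Require Import all_boot all_order all_algebra.
From mathcomp Require Import zify ring.
Local Open Scope ring_scope.
Import GRing.Theory.

Lemma sum_ind (k b : nat) (i : 'I_k) : (b < k)%N ->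
  \sum_(j < k | (val j <= val i)%N) ind b j = ((b <= i)%N : nat)%:Z.
Proof.
move=> hb; case: (leqP b i) => hbi.
  rewrite (bigD1 (Ordinal hb)) //= /ind eqxx big1 ?addr0 //.
  move=> j /andP [_ hj]; case: eqP => // hjb; case/eqP: hj; apply: val_inj; exact: hjb.
rewrite big1 // => j hj; rewrite /ind; case: (eqVneq (val j) b) => //= hjb.
by move: hj; rewrite /= hjb leqNgt hbi.
Qed.

Lemma hist_diff (k n : nat) (hn : (1 <= n)%N) (s t : word k n) :
  dB_arc s t -> forall a, hist s a - hist t a = ind (sym s 0) a - ind (sym t n.-1) a.
Proof.
move=> hst a.
have hs : size s = n by rewrite size_tuple.
have ht : size t = n by rewrite size_tuple.
have eq1 : behead s = take n.-1 t.
  apply: (inj_map val_inj); apply: (@eq_from_nth _ 0%N).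
    by rewrite !size_map size_behead size_take hs ht ifT //; lia.
  move=> i; rewrite size_map size_behead hs => hi.
  rewrite -behead_map map_take nth_behead nth_take //.
  have := hst i; rewrite /sym; apply; lia.
have es : (s : seq _) = nth a s 0 :: behead s.
  by case: (tval s) hs => [|x u] //= h; lia.
have et : (t : seq _) = take n.-1 t ++ [:: nth (nth a s 0) t n.-1].
  rewrite -[LHS](cat_take_drop n.-1); congr (_ ++ _).
  rewrite (drop_nth (nth a s 0)); last by rewrite ht; lia.
  by rewrite drop_oversize // ht; lia.
have hb : sym s 0 = val (nth a s 0) by rewrite /sym es.
have hc : sym t n.-1 = val (nth (nth a s 0) t n.-1).
  rewrite /sym (nth_map (nth a s 0)) // ht; lia.
set x := nth a s 0 in es et hb hc *; set y := nth x t n.-1 in et hc *.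
have c1 : count_mem a s = ((x == a) + count_mem a (behead s))%N by rewrite {1}es.
have c2 : count_mem a t = (count_mem a (behead s) + (y == a))%N.
  by rewrite {1}et count_cat /= addn0 eq1.
rewrite /hist /ind hb hc c1 c2 !(inj_eq val_inj) [a == _]eq_sym [a == y]eq_sym.
rewrite !PoszD; ring.
Qed.

Theorem lemma3 (k n : nat) (hk : (1 <= k)%N) (hn : (1 <= n)%N)
  (d : depth_assignment k n) (s t : word k n) :
  dB_arc s t -> valid_arc d s t ->
  eqmodK (ind (sym s 0%N))
    (fun i => psum (fun a => hist s a + ind (d s) a) i
            - psum (fun a => hist t a + ind (d t) a) i).
Proof.
move=> hst hv.
set b := sym s 0; set b' := (b.+1 %% k)%N.
have hbk : (b < k)%N.
  rewrite /b /sym (nth_map (nth (Ordinal (ltn_ord (d s))) s 0)) ?size_tuple //; exact: ltn_ord.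
have hb'k : (b' < k)%N by rewrite /b' ltn_mod; lia.
have key : forall a, hist s a + ind (d s) a - (hist t a + ind (d t) a)
                     = ind b a - ind b' a.
  move=> a; have := @hist_diff k n hn s t hst a.
  case: hv => [[h1 h2] | [h1 h2]].
    rewrite -/b -h1 -/b' h2 => e.
    have -> : hist s a = hist t a + (ind b a - ind b' a) by rewrite -e; ring.
    ring.
  rewrite -/b h2 => e.
  have -> : ind (d t) a = ind b' a by rewrite /ind /b' h1.
  have -> : hist s a = hist t a + (ind b a - ind (d s) a) by rewrite -e; ring.
  ring.
exists (if (b.+1 < k)%N then 0 else 1) => i.
rewrite /psum -sumrB.
under eq_bigr do rewrite key.
rewrite sumrB !sum_ind // /ind.
case: i => [i hik] /=.
rewrite /b'; case: ltnP => hb1.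
  rewrite modn_small //.
  case: (ltngtP b i) => h.
  - by [].
  - by [].
  - by [].
have -> : b.+1 = k by lia.
rewrite modnn leq0n.
case: (eqVneq i b) => h.
  by rewrite h leqnn.
have -> : (b <= i)%N = false by lia.
by [].
Qed.
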